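(* Let $n\ge 3$. There exists a vertex $w$ of $D_n$ of minimum degree $\delta(D_n)$ such that $\frac n2<w<n$.
   Context: $D_n$ is the graph with vertex set $\{1,\dots,n\}$ in which distinct $a,b$ are adjacent iff $\gcd(a,b)\mid n$ (the maximal Diophantine graph of order $n$; each vertex is identified with its label). $\delta(G)$ denotes the minimum degree of $G$. *)

(* Defs.v *)
From mathcomp Require Import all_boot.
Set Implicit Arguments. Unset Strict Implicit. Unset Printing Implicit Defensive.

(* Maximal Diophantine graph D_n: vertex set {1,...,n}, represented by
   'I_n where the ordinal i carries the label i.+1. *)
Definition label (n : nat) (i : 'I_n) : nat := i.+1.

Definition Dadj (n : nat) : rel 'I_n :=
  fun i j => (i != j) && (gcdn (label i) (label j) %| n).

Definition Ddeg (n : nat) (i : 'I_n) : nat := #|[set j | Dadj i j]|.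

(* degrees are <= n-1, so n is a neutral start value for n >= 1 *)
Definition Dmindeg (n : nat) : nat := \big[minn/n]_(i : 'I_n) Ddeg i.

(* Main.v *)
Require Import Defs.
From mathcomp Require Import all_boot.
From mathcomp Require Import zify.

Lemma deg_sub (n : nat) (i j : 'I_n) :
  label i %| label j -> ~~ (label i %| n) -> Ddeg j <= Ddeg i.
Proof.
move=> dij ndi; apply: subset_leq_card; apply/subsetP => b; rewrite !inE /Dadj.
case/andP=> nb g; apply/andP; split.
  apply/negP => /eqP eb; subst b; move: g.
  by rewrite gcdnC (gcdn_idPl dij) (negbTE ndi).
apply: dvdn_trans g; rewrite dvdn_gcd; apply/andP; split; first exact: dvdn_trans (dvdn_gcdl _ _) dij.
exact: dvdn_gcdr.
Qed.

Lemma deg_le (n : nat) (i : 'I_n) : Ddeg i <= n.-1.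
Proof.
rewrite /Ddeg; have <- : #|[set~ i]| = n.-1 by rewrite cardsC1 card_ord.
apply: subset_leq_card.
by apply/subsetP => b; rewrite !inE /Dadj eq_sym => /andP [].
Qed.

Lemma deg_full (n : nat) (i : 'I_n) : label i %| n -> Ddeg i = n.-1.
Proof.
move=> d; rewrite /Ddeg; have <- : #|[set~ i]| = n.-1 by rewrite cardsC1 card_ord.
apply: eq_card => b.
rewrite !inE /Dadj eq_sym.
case: (b == i) => //=; exact: dvdn_trans (dvdn_gcdl _ _) d.
Qed.

Lemma exists_good (n : nat) (hn : 3 <= n) (i : 'I_n) :
  exists w : 'I_n, Ddeg w <= Ddeg i /\ n < 2 * label w /\ label w < n.
Proof.
have lt1 : n.-2 < n by lia.
case dn: (label i %| n).
  exists (Ordinal lt1); rewrite (@deg_full n i dn); split; first exact: deg_le.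
  rewrite /label /=; lia.
have ai : label i < n.
  have := ltn_ord i; rewrite /label leq_eqVlt => /orP [/eqP e|] //.
  by move: dn; rewrite /label e dvdnn.
set a := label i in dn ai *.
have a0 : 0 < a by [].
set q := (n.-1) %/ a.
have hm : n.-1 = q * a + (n.-1) %% a by rewrite -divn_eq.
have hr : (n.-1) %% a < a by rewrite ltn_mod.
have hq : 0 < q by rewrite divn_gt0 //; lia.
have hqa : a <= q * a by rewrite leq_pmull.
have h2 : 2 * a != n by apply/negP => /eqP e; move: dn; rewrite -e dvdn_mull.
set m := q * a in hm hqa.
have lt2 : m.-1 < n by lia.
exists (Ordinal lt2); rewrite /label /=.
have -> : m.-1.+1 = m by lia.
split; last by lia.
apply: deg_sub; last by rewrite dn.
by rewrite /label /= prednK ?dvdn_mull //; lia.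
Qed.

Lemma minfold (I : eqType) (r : seq I) (x0 : nat) (F : I -> nat) k :
  k \in r -> \big[minn/x0]_(i <- r) F i <= F k.
Proof.
elim: r => // a r IH; rewrite inE big_cons => /orP [/eqP ->|/IH h].
  exact: geq_minl.
exact: leq_trans (geq_minr _ _) h.
Qed.

Theorem mainTheorem16 (n : nat) (hn : 3 <= n) :
  exists w : 'I_n, Ddeg w = Dmindeg n /\ n < 2 * label w /\ label w < n.
Proof.
have n0 : 0 < n by lia.
pose i0 : 'I_n := Ordinal n0.
case: (arg_minnP (fun i : 'I_n => Ddeg i) (erefl (predT i0))) => j _ hj.
have lo : forall k : 'I_n, Dmindeg n <= Ddeg k.
  move=> k; rewrite /Dmindeg; apply: minfold; exact: mem_index_enum.
have hi : Ddeg j <= Dmindeg n.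
  rewrite /Dmindeg; apply: (big_ind (fun x => Ddeg j <= x)).
  - by have := @deg_le n j; lia.
  - by move=> x y hx hy; rewrite leq_min hx hy.
  - by move=> k _; exact: hj.
have [w [hw rest]] := @exists_good n hn j.
exists w; split => //; apply/eqP; rewrite eqn_leq lo andbT.
exact: leq_trans hw hi.
Qed.
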